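(* For any constant $0<\eta\leq 1/4$, every $n$-vertex $d$-regular graph $G$ with $2/\eta\leq d\leq \eta\sqrt{n}$ contains $d$ pairwise vertex-disjoint copies of the star $K_{1,(1-\eta/2)d}$.
   Context: Floors are omitted: $K_{1,(1-\eta/2)d}$ means the star with $\lfloor(1-\eta/2)d\rfloor$ leaves. *)

(* Defs.v *)
From HB Require Import structures.
From mathcomp Require Import all_boot all_order all_algebra.
Set Implicit Arguments. Unset Strict Implicit. Unset Printing Implicit Defensive.
Import Order.TTheory GRing.Theory Num.Theory.

Definition simple_graph (V : finType) (e : rel V) : Prop :=
  symmetric e /\ irreflexive e.

Definition regular (V : finType) (e : rel V) (d : nat) : Prop :=
  forall v : V, #|[set w | e v w]| = d.

Definition star_copy (V : finType) (e : rel V) (m : nat) (c : V) (L : {set V}) : Prop :=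
  #|L| = m /\ (forall x, x \in L -> e c x).

Definition has_disjoint_stars (V : finType) (e : rel V) (k m : nat) : Prop :=
  exists (c : 'I_k -> V) (L : 'I_k -> {set V}),
    (forall i, star_copy e m (c i) (L i)) /\
    (forall i j, i != j -> [disjoint (c i |: L i) & (c j |: L j)]).

(* Main.v *)
Require Import Defs.
From HB Require Import structures.
From mathcomp Require Import all_boot all_order all_algebra.
From mathcomp Require Import reals.
From mathcomp Require Import lra zify.
Import Order.TTheory GRing.Theory Num.Theory.


Lemma sub_of_size (V : finType) (A : {set V}) m :
  m <= #|A| -> exists L : {set V}, L \subset A /\ #|L| = m.
Proof.
move=> hm; exists [set x in take m (enum A)]; split.
  by apply/subsetP => x; rewrite inE => /mem_take; rewrite mem_enum.
rewrite cardsE; have /card_uniqP -> := take_uniq m (enum_uniq (mem A)).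
by rewrite size_takel // -cardE.
Qed.

Lemma card_sumb (V : finType) (P : pred V) (A : {set V}) :
  #|[set x | P x] :&: A| = \sum_(x in A) (P x : nat).
Proof.
rewrite -sum1_card.
transitivity (\sum_(x | (x \in A) && P x) 1).
  by apply: eq_bigl => x; rewrite !inE andbC.
rewrite big_mkcondr /=; apply: eq_bigr => x _; by case: (P x).
Qed.


Lemma count_bad (V : finType) (e : rel V) d m (U : {set V}) :
  (m <= d)%N -> symmetric e -> regular e d ->
  (forall v, v \notin U -> #|[set w | e v w] :\: U| < m) ->
  (#|V| - #|U|) * (d - m + 1) <= #|U| * d.
Proof.
move=> md sym reg H.
have H1 v : v \notin U -> d - m + 1 <= #|[set w | e v w] :&: U|.
  move=> vU; have := cardsID U [set w | e v w]; rewrite reg; have := H v vU. lia.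
have -> : #|V| - #|U| = #|~: U| by have := cardsC U; lia.
rewrite -sum_nat_const.
apply: (@leq_trans (\sum_(v in ~: U) \sum_(w in U) (e v w : nat))).
  apply: leq_sum => v; rewrite inE => vU; rewrite -(@card_sumb _ (e v)); exact: H1.
rewrite exchange_big /= -sum_nat_const.
apply: leq_sum => w _.
under eq_bigr => v _ do rewrite sym.
rewrite -(@card_sumb _ (e w)) -(reg w); apply: subset_leq_card; exact: subsetIl.
Qed.


Lemma greedy (V : finType) (e : rel V) d m :
  (m < d)%N -> simple_graph e -> regular e d ->
  (forall u, u <= (d-1)*(m+1) -> u*d < (#|V| - u)*(d-m+1)) ->
  has_disjoint_stars e d m.
Proof.
move=> md [sym irr] reg Hu.
pose R := fun p q : V * {set V} => [disjoint p.1 |: p.2 & q.1 |: q.2].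
have claim : forall k, k <= d -> exists s (U : {set V}),
  [/\ size s = k, forall p, p \in s -> star_copy e m p.1 p.2, pairwise R s,
      forall p, p \in s -> p.1 |: p.2 \subset U & #|U| <= k*(m+1)].
  elim=> [|k IH] hk.
    by exists [::], set0; split => //; rewrite cards0.
  have [s [U [hs hst hpw hsub hU]]] := IH (ltnW hk).
  have [/existsP [c /andP [cU hc]] | /existsPn hn] :=
    boolP [exists c, (c \notin U) && (m <= #|[set w | e c w] :\: U|)]; last first.
    exfalso.
    have := @count_bad V e d m U (ltnW md) sym reg.
    have hb : forall v, v \notin U -> #|[set w | e v w] :\: U| < m.
      by move=> v vU; have := hn v; rewrite vU /= ltnNge.
    move=> /(_ hb); rewrite leqNgt; move/negP; apply.
    apply: Hu; apply: (leq_trans hU); apply: leq_mul => //; lia.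
  have [L [hLs hL]] := @sub_of_size _ _ _ hc.
  have hLU : c |: L \subset ~: U.
    rewrite subUset sub1set inE cU /=.
    apply: (subset_trans hLs); apply/subsetP => x; rewrite !inE; by case/andP.
  exists ((c, L) :: s), ((c |: L) :|: U); split => /=.
  - by rewrite hs.
  - move=> p; rewrite inE => /orP [/eqP -> | /hst //]; split => //=.
    move=> x /(subsetP hLs); rewrite !inE; by case/andP.
  - rewrite hpw andbT; apply/allP => p /hsub ps.
    rewrite /R /= disjoints_subset; apply: (subset_trans hLU).
    by rewrite setCS.
  - move=> p; rewrite inE => /orP [/eqP -> | /hsub ps] /=; first exact: subsetUl.
    exact: (subset_trans ps (subsetUr _ _)).
  - rewrite cardsU cardsU1 hL.
    have : (c \notin L) <= 1 by case: (c \notin L).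
    lia.
have [s [U [hs hst hpw _ _]]] := claim d (leqnn d).
case: s hs hst hpw => [|x0 s'] hs hst hpw; first by rewrite -hs in md.
set s := x0 :: s' in hs hst hpw.
exists (fun i : 'I_d => (nth x0 s i).1), (fun i : 'I_d => (nth x0 s i).2); split.
  move=> i; apply: hst; apply: mem_nth; by rewrite hs.
move=> i j; move/(pairwiseP x0): hpw.
move=> hP ij.
have hi : (i : nat) \in gtn (size s) by rewrite inE hs.
have hj : (j : nat) \in gtn (size s) by rewrite inE hs.
case: (ltngtP i j) => [lij|lji|eij].
- exact: hP.
- by rewrite disjoint_sym; apply: hP.
- by move: ij; rewrite (val_inj eij) eqxx.
Qed.

Local Open Scope ring_scope.



Lemma I0_elim (T : Type) : 'I_0 -> T.
Proof. by case. Qed.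

Theorem lemma6p1 (R : realType) (eta : R) (V : finType) (e : rel V) (d : nat) :
  0 < eta -> eta <= 1 / 4 ->
  simple_graph e -> regular e d ->
  2 / eta <= (d%:R : R) -> (d%:R : R) <= eta * Num.sqrt (#|V|%:R : R) ->
  has_disjoint_stars e d (Num.truncn ((1 - eta / 2) * d%:R)).
Proof.
move=> e0 e4 sg reg _ hdn.
case: d reg hdn => [|d'] reg hdn.
  by exists (@I0_elim V), (@I0_elim {set V}); split => -[].
set d := d'.+1 in reg hdn *.
set m := Num.truncn _.
set n := #|V| in hdn *.
have xge0 : 0 <= (1 - eta / 2) * d%:R :> R.
  apply: mulr_ge0; last exact: ler0n. lra.
have hm : (m%:R : R) <= (1 - eta / 2) * d%:R by rewrite /m truncn_le.
have d1 : (1 : R) <= d%:R by rewrite ler1n.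
have md : (m < d)%N by rewrite -(ltr_nat R); nra.
have hsq : (d%:R : R) * d%:R <= eta * eta * n%:R.
  have s0 : 0 <= Num.sqrt (n%:R : R) := sqrtr_ge0 _.
  have ss : Num.sqrt (n%:R : R) * Num.sqrt (n%:R : R) = n%:R.
    by rewrite -expr2 sqr_sqrtr // ler0n.
  rewrite -ss; nra.
apply: greedy => //.
move=> u hu.
have hu' : (u%:R : R) <= (d%:R - 1) * (m%:R + 1).
  have := hu; rewrite -(ler_nat R) natrM natrB // natrD; lra.
have md' : (m%:R + 1 : R) <= d%:R by rewrite natr1 ler_nat.
have ud : (u%:R : R) <= (d%:R - 1) * d%:R.
  apply: (le_trans hu'); apply: ler_wpM2l; lra.
have n0 : (0 : R) <= n%:R := ler0n _ _.
have e2 : eta * eta * n%:R <= n%:R :> R.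
  have : eta * eta <= 1 by nra.
  nra.
have un : (u%:R : R) < n%:R by nra.
have un' : (u <= n)%N by rewrite -(ler_nat R); lra.
rewrite -(ltr_nat R) !natrM natrB // natrD natrB ?(ltnW md) //.
have hA : (u%:R : R) * (2 + eta) < eta * n%:R.
  have h1 : (u%:R : R) < d%:R * d%:R by nra.
  have h2 : (d%:R : R) * d%:R * (2 + eta) <= eta * eta * n%:R * (2 + eta).
    apply: ler_wpM2r; lra.
  have h3 : eta * eta * (2 + eta) <= eta by nra.
  nra.
have hB : 2 * (u%:R : R) < (n%:R - u%:R) * eta by lra.
have hC : eta * d%:R <= 2 * (d%:R - m%:R + 1) :> R by lra.
have hD : 0 < (n%:R - u%:R : R) by lra.
have : 2 * u%:R * d%:R < (n%:R - u%:R) * eta * d%:R :> R.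
  rewrite ltr_pM2r; [lra | lra].
nra.
Qed.
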